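(* Let $\{x^k\}$ be generated by the ABP algorithm described in the context and assume (A1)–(A6), (A7'), (A8): (A1) $\mathcal F$ is continuously differentiable; (A2) $C$, $Q$ nonempty closed convex, $z_i^*>-\infty$ for each $i$; (A3) each $f_i$ convex; (A4) $\Omega\ne\emptyset$; (A5) $\lambda_k>0$, $\sum\lambda_k=\infty$, $\sum\lambda_k^2<\infty$; (A6) $0<\underline\alpha\le\alpha_k\le\bar\alpha$, $0<\underline\beta\le\beta_k\le\bar\beta$, $0<\underline\gamma\le\gamma_k\le\bar\gamma$ for all $k$; (A7') $\sigma:=\varphi^*-\varphi_{\mathrm{lb}}\le\varepsilon_0$ for a known constant $\varepsilon_0\ge0$; (A8) $\sup_k\|x^k\|\le B<\infty$. Then for every $x^*\in\Omega$ and all $k\ge0$, $$\|x^{k+1}-x^*\|^2\le\|x^k-x^*\|^2-\frac{2\lambda_k}{\eta_k}\Phi_k+\frac{2\bar\alpha\sigma}{\mu}\lambda_k+\lambda_k^2.$$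
   Context: Let $n,m\ge1$, $\mathcal F=(f_1,\dots,f_m)\colon\mathbb R^n\to\mathbb R^m$, $C\subset\mathbb R^n$, $Q\subset\mathbb R^m$, $Q^+:=Q-\mathbb R^m_+=\{y-u:y\in Q,u\in\mathbb R^m_+\}$; $P_S$ is Euclidean projection onto a nonempty closed convex set $S$. Let $z_i^*:=\inf_{x\in C}f_i(x)$, fix $r$ with $r_i>0$, $\sum r_i=1$. Define $\varphi(x):=\max_ir_i(f_i(x)-z_i^* )$, $H(x):=\tfrac12\mathrm{dist}^2(x,C)$, $G(x):=\tfrac12\mathrm{dist}^2(\mathcal F(x),Q^+)$, $\mathcal S:=\{x:H(x)=0,G(x)=0\}$, $\varphi^*:=\inf_{\mathcal S}\varphi$, $\Omega:=\{x\in\mathcal S:\varphi(x)=\varphi^*\}$, $\varphi_{\mathrm{lb}}:=\inf_C\varphi$. ABP algorithm: given $x^0$, $\mu>0$, positive sequences $\{\alpha_k\},\{\beta_k\},\{\gamma_k\},\{\lambda_k\}$: $p^k:=P_{Q^+}(\mathcal F(x^k))$, $\rho^k:=\mathcal F(x^k)-p^k$, $z^k:=x^k-P_C(x^k)$, $v^k:=J_{\mathcal F}(x^k)^T\rho^k$, $w^k:=r_{i^*}\nabla f_{i^*}(x^k)$ with arbitrary $i^*\in\arg\max_ir_i(f_i(x^k)-z_i^* )$, $\Delta_k:=\varphi(x^k)-\varphi_{\mathrm{lb}}$, $d^k:=\alpha_k\mathbf 1_{\{\Delta_k\ge0\}}w^k+\beta_kz^k+\gamma_kv^k$, $\eta_k:=\max(\mu,\|d^k\|)$,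 $x^{k+1}:=x^k-(\lambda_k/\eta_k)d^k$. Notation: $H_k:=H(x^k)$, $G_k:=G(x^k)$, $\Delta_k^+:=\max(\Delta_k,0)$, $\Phi_k:=\alpha_k\Delta_k^++\beta_kH_k+\gamma_kG_k$. *)

(* Defs.v *)
From HB Require Import structures.
From mathcomp Require Import all_boot all_order all_algebra.
From mathcomp Require Import all_classical all_reals all_analysis.
Set Implicit Arguments. Unset Strict Implicit. Unset Printing Implicit Defensive.
Import Order.TTheory GRing.Theory Num.Theory.
Import numFieldNormedType.Exports.
Local Open Scope classical_set_scope.
Local Open Scope ring_scope.

Section ABP.
Variable R : realType.

(* Euclidean inner product and norm on R^n (the library norm on 'rV is the max norm) *)
Definition dotv {n} (u v : 'rV[R]_n) : R := \sum_(j < n) u ord0 j * v ord0 j.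
Definition enorm {n} (u : 'rV[R]_n) : R := Num.sqrt (dotv u u).

Definition edist {n} (S : set 'rV[R]_n) (x : 'rV[R]_n) : R :=
  inf [set enorm (x - y) | y in S].

Definition is_proj {n} (S : set 'rV[R]_n) (x p : 'rV[R]_n) : Prop :=
  S p /\ forall y, S y -> enorm (x - p) <= enorm (x - y).

Definition grad {n} (f : 'rV[R]_n -> R) (x : 'rV[R]_n) : 'rV[R]_n :=
  \row_(j < n) 'D_(delta_mx ord0 j) f x.

Variables (n m : nat).

Definition Fvec (f : 'I_m -> 'rV[R]_n -> R) (x : 'rV[R]_n) : 'rV[R]_m :=
  \row_(i < m) f i x.

Definition Qplus (Q : set 'rV[R]_m) : set 'rV[R]_m :=
  [set y - u | y in Q & u in [set u : 'rV[R]_m | forall i, 0 <= u ord0 i]].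

Definition zstar (f : 'I_m -> 'rV[R]_n -> R) (C : set 'rV[R]_n) (i : 'I_m) : R :=
  inf [set f i x | x in C].

(* phi(x) = max_i r_i (f_i(x) - zstar_i)  (sup of a finite nonempty set = max) *)
Definition phi (f : 'I_m -> 'rV[R]_n -> R) (C : set 'rV[R]_n) (r : 'I_m -> R)
    (x : 'rV[R]_n) : R :=
  sup [set r i * (f i x - zstar f C i) | i in [set: 'I_m]].

Definition Hfun (C : set 'rV[R]_n) (x : 'rV[R]_n) : R := (edist C x) ^+ 2 / 2.

Definition Gfun (f : 'I_m -> 'rV[R]_n -> R) (Q : set 'rV[R]_m) (x : 'rV[R]_n) : R :=
  (edist (Qplus Q) (Fvec f x)) ^+ 2 / 2.

Definition Sfeas (f : 'I_m -> 'rV[R]_n -> R) (C : set 'rV[R]_n) (Q : set 'rV[R]_m) :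
  set 'rV[R]_n := [set x | Hfun C x = 0 /\ Gfun f Q x = 0].

Definition phistar f C Q r : R := inf [set phi f C r x | x in Sfeas f C Q].

Definition Omega f C Q r : set 'rV[R]_n :=
  [set x | Sfeas f C Q x /\ phi f C r x = phistar f C Q r].

Definition philb f C r : R := inf [set phi f C r x | x in C].

End ABP.

(* Main.v *)
Require Import Defs.
From HB Require Import structures.
From mathcomp Require Import all_boot all_order all_algebra.
From mathcomp Require Import all_classical all_reals all_analysis.
From mathcomp Require Import ring lra.
Import Order.TTheory GRing.Theory Num.Theory.
Import numFieldNormedType.Exports.
Local Open Scope classical_set_scope.
Local Open Scope ring_scope.

Section H.
Variable R : realType.
Variable n : nat.
Implicit Types u v w : 'rV[R]_n.

Lemma dotvC u v : dotv u v = dotv v u.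
Proof. by apply: eq_bigr => j _; rewrite mulrC. Qed.
Lemma dotvDl u v w : dotv (u + v) w = dotv u w + dotv v w.
Proof. by rewrite /dotv -big_split; apply: eq_bigr => j _; rewrite mxE mulrDl. Qed.
Lemma dotvZl a u v : dotv (a *: u) v = a * dotv u v.
Proof. by rewrite /dotv mulr_sumr; apply: eq_bigr => j _; rewrite mxE mulrA. Qed.
Lemma dotvNl u v : dotv (- u) v = - dotv u v.
Proof. by rewrite -scaleN1r dotvZl mulN1r. Qed.
Lemma dotvBl u v w : dotv (u - v) w = dotv u w - dotv v w.
Proof. by rewrite dotvDl dotvNl. Qed.
Lemma dotvDr u v w : dotv w (u + v) = dotv w u + dotv w v.
Proof. by rewrite dotvC dotvDl !(dotvC w). Qed.
Lemma dotvBr u v w : dotv w (u - v) = dotv w u - dotv w v.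
Proof. by rewrite dotvC dotvBl !(dotvC w). Qed.
Lemma dotvZr a u v : dotv v (a *: u) = a * dotv v u.
Proof. by rewrite dotvC dotvZl dotvC. Qed.
Lemma dotv_ge0 u : 0 <= dotv u u.
Proof. by apply: sumr_ge0 => j _; rewrite -expr2 sqr_ge0. Qed.
Lemma enorm_ge0 u : 0 <= enorm u.
Proof. exact: sqrtr_ge0. Qed.
Lemma enorm_sq u : enorm u ^+ 2 = dotv u u.
Proof. by rewrite /enorm sqr_sqrtr // dotv_ge0. Qed.

Lemma dotv_expand u v s :
  dotv (u - s *: v) (u - s *: v) = dotv u u - 2 * s * dotv u v + s ^+ 2 * dotv v v.
Proof.
rewrite !dotvBl !dotvBr !dotvZl !dotvZr (dotvC v u).
rewrite -[2]/(1 + 1); ring.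
Qed.

Lemma enorm_le_dot u v : enorm u <= enorm v -> dotv u u <= dotv v v.
Proof.
move=> h; rewrite -!enorm_sq; rewrite lerXn2r // ?nnegrE ?enorm_ge0 //.
Qed.

Lemma proj_char (S : set 'rV[R]_n) x p y :
  convex_set (S : set (convex_lmodType _)) -> is_proj S x p -> S y ->
  dotv (x - p) (y - p) <= 0.
Proof.
move=> cS [Sp pmin] Sy.
set c := dotv (x - p) (y - p); set b := dotv (y - p) (y - p).
have key : forall t, 0 < t -> t <= 1 -> 2 * c <= t * b.
  move=> t t0 t1.
  have Sq : S (t *: y + (1 - t) *: p).
    have := cS y p (Itv01 (ltW t0) t1).
    rewrite !inE; apply => //.
  have := @enorm_le_dot _ _ (pmin _ Sq).
  have -> : x - (t *: y + (1 - t) *: p) = (x - p) - t *: (y - p).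
    by apply/rowP => j; rewrite !mxE; ring.
  rewrite dotv_expand -/c -/b => h.
  have : 0 <= t * (t * b - 2 * c) by rewrite mulrBr mulrA -expr2; lra.
  rewrite pmulr_rge0 //; lra.
rewrite leNgt; apply/negP => c0.
have b0 : 0 <= b by exact: dotv_ge0.
have cb : 0 < c + b by lra.
have := key (c / (c + b)) (divr_gt0 c0 cb) _.
  rewrite ler_pdivrMr // mul1r lerDl.
  idtac.
rewrite mulrAC ler_pdivlMr // => h.
nra.
Qed.

Lemma edist_proj (S : set 'rV[R]_n) x p : is_proj S x p -> Defs.edist S x = enorm (x - p).
Proof.
move=> [Sp pmin]; apply/eqP; rewrite eq_le; apply/andP; split.
  have hl : has_lbound [set enorm (x - y) | y in S].
    by exists 0; move=> z [y _ <-]; exact: enorm_ge0.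
  by apply: (ge_inf hl); exists p.
apply: lb_le_inf; first by exists (enorm (x - p)), p.
by move=> z [y Sy <-]; exact: pmin.
Qed.

Lemma grad_dot (f : 'rV[R]_n -> R) x h : differentiable f x ->
  dotv (grad f x) h = 'D_h f x.
Proof.
move=> df; rewrite deriveE // {2}(row_sum_delta h) linear_sum /dotv.
apply: eq_bigr => j _; rewrite linearZ /= mxE deriveE // mulrC.
by [].
Qed.

Lemma grad_ineq (f : 'rV[R]_n -> R) x y : differentiable f x ->
  convex_function [set: _] f -> dotv (grad f x) (y - x) <= f y - f x.
Proof.
move=> df cf; rewrite grad_dot //.
set h := y - x.
have dv := @diff_derivable _ _ _ _ _ h df.
rewrite /derive.
set g := (fun t : R => _).
have cr : g @ 0^'+ --> lim (g @ 0^').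
  apply: cvg_trans dv.
  apply: cvg_app; apply: within_subset => t /= t0.
  by rewrite gt_eqF.
apply: (cvgr_to_le cr).
near=> t.
have t0 : 0 < t by near: t; exact: nbhs_right_gt.
have t1 : t <= 1 by apply: ltW; near: t; exact: nbhs_right_lt.
have := cf (Itv01 (ltW t0) t1) y x (in_setT _) (in_setT _).
rewrite convRE /=.
have -> : conv (Itv01 (ltW t0) t1) (y : convex_lmodType _) x = t *: h + x :> 'rV[R]_n.
  by rewrite /conv /= /h; apply/rowP => j; rewrite !mxE /unstable.onem; ring.
rewrite /g /= /unstable.onem => hh.
rewrite ler_pdivrMl //.
lra.
Unshelve. all: by end_near.
Qed.

Lemma dotv_delta u (i : 'I_n) : dotv u (delta_mx 0 i) = u 0 i.
Proof.
rewrite /dotv (bigD1 i) //= big1 ?addr0; first by rewrite mxE !eqxx mulr1.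
by move=> j ji; rewrite mxE (negbTE ji) andbF mulr0.
Qed.

Lemma dotv_suml (I : finType) (a : I -> R) (g : I -> 'rV[R]_n) h :
  dotv (\sum_i a i *: g i) h = \sum_i a i * dotv (g i) h.
Proof.
rewrite (big_morph (fun u => dotv u h) (id1 := 0) (op1 := +%R)).
- by apply: eq_bigr => i _; rewrite dotvZl.
- by move=> u v; rewrite dotvDl.
- by rewrite /dotv big1 // => j _; rewrite mxE mul0r.
Qed.

Lemma enorm_eq0 u : enorm u = 0 -> u = 0.
Proof.
move=> /eqP; rewrite sqrtr_eq0 => h.
have h0 : dotv u u = 0 by apply/eqP; rewrite eq_le h dotv_ge0.
apply/rowP => j; rewrite mxE.
have h1 : forall k : 'I_n, true -> u 0 k * u 0 k = 0.
  apply: psumr_eq0P (h0 : \sum_(k < n) u 0 k * u 0 k = 0).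
  by move=> k _; rewrite -expr2 sqr_ge0.
by move: (h1 j isT) => /eqP; rewrite mulf_eq0 orbb => /eqP.
Qed.

Lemma proj_fixed (S : set 'rV[R]_n) y p : is_proj S y p ->
  (Defs.edist S y) ^+ 2 / 2 = 0 -> S y.
Proof.
move=> pr; rewrite (@edist_proj _ _ _ pr) => /eqP; rewrite mulf_eq0 invr_eq0 pnatr_eq0 orbF.
rewrite expf_eq0 /= => /eqP /enorm_eq0 /eqP; rewrite subr_eq0 => /eqP ->.
by case: pr.
Qed.

End H.

Section Q.
Variable R : realType.
Variable m : nat.

Lemma Qplus_convex (Q : set 'rV[R]_m) :
  convex_set (Q : set (convex_lmodType _)) ->
  convex_set (Qplus Q : set (convex_lmodType _)).
Proof.
move=> cQ a b t; rewrite !inE => -[q1 Qq1 [u1 u1p <-]] [q2 Qq2 [u2 u2p <-]].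
have := cQ q1 q2 t; rewrite !inE => /(_ Qq1 Qq2) Qc.
exists (conv t (q1 : convex_lmodType _) q2) => //.
exists (t%:num *: u1 + (1 - t%:num) *: u2).
  move=> i; rewrite !mxE addr_ge0 // mulr_ge0 //; rewrite ?u1p ?u2p //.
by apply/rowP => j; rewrite /conv /= !mxE /unstable.onem; ring.
Qed.

Lemma rho_ge0 (Q : set 'rV[R]_m) y p : is_proj (Qplus Q) y p ->
  forall i, 0 <= (y - p) 0 i.
Proof.
move=> [[q Qq [u up pe]] pmin] i.
rewrite leNgt; apply/negP => neg.
set c := - (y - p) 0 i.
have c0 : 0 < c by rewrite /c oppr_gt0.
have Qp' : Qplus Q (p - c *: delta_mx 0 i).
  exists q => //; exists (u + c *: delta_mx 0 i).
    move=> j; rewrite !mxE addr_ge0 // mulr_ge0 // ?(ltW c0) //.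
  by rewrite -pe opprD addrA.
have := @enorm_le_dot _ _ _ _ (pmin _ Qp').
have -> : y - (p - c *: delta_mx 0 i) = (y - p) - (- c) *: delta_mx 0 i.
  by apply/rowP => j; rewrite !mxE; ring.
rewrite dotv_expand dotv_delta.
have -> : dotv (delta_mx 0 i : 'rV[R]_m) (delta_mx 0 i) = 1 by rewrite dotv_delta mxE !eqxx.
rewrite -/c /c; nra.
Qed.
End Q.

Section P.
Variable R : realType.
Variables n m : nat.
Variables (f : 'I_m -> 'rV[R]_n -> R) (C : set 'rV[R]_n) (r : 'I_m -> R).

Lemma phi_ub x j : r j * (f j x - zstar f C j) <= phi f C r x.
Proof.
have hb : has_ubound [set r i * (f i x - zstar f C i) | i in [set: 'I_m]].
  exists (\sum_i `|r i * (f i x - zstar f C i)|) => z [i _ <-].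
  apply: le_trans (ler_norm _) _.
  by rewrite (bigD1 i) //= lerDl sumr_ge0.
by apply: (ub_le_sup hb); exists j.
Qed.

Lemma zstar_le i x : has_lbound [set f i y | y in C] -> C x -> zstar f C i <= f i x.
Proof. by move=> hl Cx; apply: (ge_inf hl); exists x. Qed.

End P.
Arguments proj_fixed {R n S y p}.
Arguments proj_char {R n S x p y}.
Arguments edist_proj {R n S x p}.
Arguments grad_ineq {R n f x} y.
Arguments rho_ge0 {R m Q y p}.
Arguments Qplus_convex {R m Q}.
Arguments phi_ub {R n m} f C r x j.
Arguments zstar_le {R n m f C} i {x}.

Theorem lemma16 (R : realType) (n m : nat)
  (f : 'I_m -> 'rV[R]_n -> R) (C : set 'rV[R]_n) (Q : set 'rV[R]_m)
  (r : 'I_m -> R)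
  (PC : 'rV[R]_n -> 'rV[R]_n) (PQ : 'rV[R]_m -> 'rV[R]_m)
  (x : nat -> 'rV[R]_n) (istar : nat -> 'I_m) (mu : R)
  (alpha beta gamma lambda : nat -> R)
  (alo ahi blo bhi glo ghi eps0 B : R) :
  (0 < n)%N -> (0 < m)%N ->
  (forall i, 0 < r i) -> \sum_(i < m) r i = 1 ->
  (* projections *)
  (forall y, is_proj C y (PC y)) ->
  (forall y, is_proj (Qplus Q) y (PQ y)) ->
  (* (A1) F continuously differentiable *)
  (forall i y, differentiable (f i) y) ->
  (forall i, continuous (grad (f i))) ->
  (* (A2) *)
  C !=set0 -> closed C -> convex_set C ->
  Q !=set0 -> closed Q -> convex_set Q ->
  (forall i, has_lbound [set f i y | y in C]) ->
  (* (A3) *)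
  (forall i, convex_function [set: _] (f i)) ->
  (* (A4) *)
  Omega f C Q r !=set0 ->
  (* (A5) *)
  (forall k, 0 < lambda k) ->
  (series lambda @ \oo --> +oo) ->
  cvg (series (fun k => lambda k ^+ 2) @ \oo) ->
  (* (A6) *)
  0 < alo -> 0 < blo -> 0 < glo ->
  (forall k, alo <= alpha k <= ahi) ->
  (forall k, blo <= beta k <= bhi) ->
  (forall k, glo <= gamma k <= ghi) ->
  (* (A7') *)
  0 <= eps0 ->
  phistar f C Q r - philb f C r <= eps0 ->
  (* (A8) *)
  (forall k, enorm (x k) <= B) ->
  (* ABP algorithm *)
  0 < mu ->
  (forall k, r (istar k) * (f (istar k) (x k) - zstar f C (istar k))
             = phi f C r (x k)) ->
  (forall k,
     let p := PQ (Fvec f (x k)) in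
     let rho := Fvec f (x k) - p in
     let z := x k - PC (x k) in
     let v := \sum_(i < m) rho ord0 i *: grad (f i) (x k) in
     let w := r (istar k) *: grad (f (istar k)) (x k) in
     let Delta := phi f C r (x k) - philb f C r in
     let d := (if 0 <= Delta then alpha k else 0) *: w + beta k *: z + gamma k *: v in
     let eta := Num.max mu (enorm d) in
     x k.+1 = x k - (lambda k / eta) *: d) ->
  (* conclusion *)
  forall xs, Omega f C Q r xs ->
  forall k,
     let p := PQ (Fvec f (x k)) in
     let rho := Fvec f (x k) - p in
     let z := x k - PC (x k) in
     let v := \sum_(i < m) rho ord0 i *: grad (f i) (x k) in
     let w := r (istar k) *: grad (f (istar k)) (x k) in
     let Delta := phi f C r (x k) - philb f C r in
     let d := (if 0 <= Delta then alpha k else 0) *: w + beta k *: z + gamma k *: v in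
     let eta := Num.max mu (enorm d) in
     let sigma := phistar f C Q r - philb f C r in
     let Phi := alpha k * Num.max Delta 0 + beta k * Hfun C (x k)
                + gamma k * Gfun f Q (x k) in
     enorm (x k.+1 - xs) ^+ 2 <=
       enorm (x k - xs) ^+ 2 - 2 * lambda k / eta * Phi
       + 2 * ahi * sigma / mu * lambda k + lambda k ^+ 2.
Proof.
move=> n0 m0 rpos rsum hPC hPQ fdiff fcont Cne Ccl Ccv Qne Qcl Qcv flb fcvx Omne
  lpos lser lsq alo0 blo0 glo0 ab bb gb heps0 sig_eps Bd mu0 histar hupd xs
  [[HSxs GSxs] phixs] k.
cbv zeta.
set p := PQ (Fvec f (x k)).
set rho := Fvec f (x k) - p.
set z := x k - PC (x k).
set v := \sum_(i < m) rho ord0 i *: grad (f i) (x k).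
set w := r (istar k) *: grad (f (istar k)) (x k).
set Delta := phi f C r (x k) - philb f C r.
set d := (if 0 <= Delta then alpha k else 0) *: w + beta k *: z + gamma k *: v.
set eta := Num.max mu (enorm d).
set sigma := phistar f C Q r - philb f C r.
set Phi := alpha k * Num.max Delta 0 + beta k * Hfun C (x k) + gamma k * Gfun f Q (x k).
have hx : x k.+1 = x k - (lambda k / eta) *: d := hupd k.
have Cxs : C xs := proj_fixed (hPC xs) HSxs.
have Qxs : Qplus Q (Fvec f xs) := proj_fixed (hPQ (Fvec f xs)) GSxs.
set D := x k - xs.
have [a0 a1] := andP (ab k).
have [b0 b1] := andP (bb k).
have [g0 g1] := andP (gb k).
have phi_ge0 : forall y, C y -> 0 <= phi f C r y.
  move=> y Cy; apply: le_trans (phi_ub f C r y (Ordinal m0)).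
  by rewrite mulr_ge0 ?(ltW (rpos _)) // subr_ge0 zstar_le.
have Sfeas_C : forall y, Sfeas f C Q y -> C y.
  by move=> y [Hy _]; exact: proj_fixed (hPC y) Hy.
have sig0 : 0 <= sigma.
  rewrite subr_ge0; apply: lb_le_inf.
    have [y Oy] := Omne; exists (phi f C r y), y => //; by case: Oy.
  move=> _ [y Sy <-].
  have hl : has_lbound [set phi f C r y | y in C].
    by exists 0 => _ [y' Cy' <-]; exact: phi_ge0.
  by apply: (ge_inf hl); exists y => //; exact: Sfeas_C.
have T1 : Delta - sigma <= dotv w D.
  have gi := grad_ineq xs (fdiff (istar k) (x k)) (fcvx (istar k)).
  rewrite /w dotvZl.
  have -> : dotv (grad (f (istar k)) (x k)) D = - dotv (grad (f (istar k)) (x k)) (xs - x k).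
    by rewrite /D -opprB dotvC dotvNl dotvC.
  have u1 := phi_ub f C r xs (istar k).
  have u2 := histar k.
  rewrite /Delta /sigma -phixs.
  have ri := rpos (istar k).
  have : r (istar k) * (f (istar k) xs - f (istar k) (x k)) >=
         r (istar k) * dotv (grad (f (istar k)) (x k)) (xs - x k).
    by rewrite ler_wpM2l // ltW.
  nra.
have Hk : Hfun C (x k) = dotv z z / 2.
  by rewrite /Hfun (edist_proj (hPC (x k))) enorm_sq.
have T2 : dotv z z <= dotv z D.
  have pc := proj_char Ccv (hPC (x k)) Cxs.
  have -> : D = z - (xs - PC (x k)) by rewrite /D /z; apply/rowP => j; rewrite !mxE; ring.
  rewrite dotvBr; lra.
have Gk : Gfun f Q (x k) = dotv rho rho / 2.
  by rewrite /Gfun (edist_proj (hPQ _)) enorm_sq.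
have T3 : dotv rho rho <= dotv v D.
  have pc := proj_char (Qplus_convex Qcv) (hPQ (Fvec f (x k))) Qxs.
  have rg := rho_ge0 (hPQ (Fvec f (x k))).
  have e1 : dotv rho (Fvec f (x k) - Fvec f xs) <= dotv v D.
    rewrite /v dotv_suml /dotv; apply: ler_sum => i _.
    move: (rg i); rewrite !mxE => rgi.
    rewrite -[\sum_(j < n) _ * D ord0 j]/(dotv (grad (f i) (x k)) D).
    have gi := grad_ineq xs (fdiff i (x k)) (fcvx i).
    have -> : dotv (grad (f i) (x k)) D = - dotv (grad (f i) (x k)) (xs - x k).
      by rewrite /D -opprB dotvC dotvNl dotvC.
    apply: ler_wpM2l; first exact: rgi.
    lra.
  apply: le_trans e1.
  have -> : Fvec f (x k) - Fvec f xs = rho - (Fvec f xs - p).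
    by rewrite /rho; apply/rowP => j; rewrite !mxE; ring.
  rewrite dotvBr; lra.
have zz0 := @dotv_ge0 _ _ z.
have rr0 := @dotv_ge0 _ _ rho.
have comb : Phi - dotv d D <= ahi * sigma.
  rewrite /Phi /d !dotvDl !dotvZl Hk Gk.
  have hb : beta k * (dotv z z / 2) <= beta k * dotv z D.
    by apply: ler_wpM2l; [exact: ltW (lt_le_trans blo0 b0)| lra].
  have hg : gamma k * (dotv rho rho / 2) <= gamma k * dotv v D.
    by apply: ler_wpM2l; [exact: ltW (lt_le_trans glo0 g0)| lra].
  have as0 : alpha k * sigma <= ahi * sigma by apply: ler_wpM2r.
  case: (leP 0 Delta) => hD.
    have T1' := T1; rewrite /w dotvZl in T1'.
    have ha : alpha k * (Delta - sigma) <= alpha k * (r (istar k) * dotv (grad (f (istar k)) (x k)) D).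
      by apply: ler_wpM2l; [exact: ltW (lt_le_trans alo0 a0)| lra].
    lra.
  have : 0 <= ahi * sigma by apply: mulr_ge0 => //; apply: le_trans a1; exact: ltW (lt_le_trans alo0 a0).
  rewrite mul0r mulr0; lra.
have eta_mu : mu <= eta by rewrite /eta le_max lexx.
have eta_d : enorm d <= eta by rewrite /eta le_max lexx orbT.
have eta0 : 0 < eta by exact: lt_le_trans mu0 eta_mu.
have lk := lpos k.
set s := lambda k / eta.
have s0 : 0 <= s by rewrite /s divr_ge0 // ltW.
have e1 : s ^+ 2 * dotv d d <= lambda k ^+ 2.
  rewrite -enorm_sq -exprMn.
  rewrite lerXn2r //.
  - by rewrite nnegrE mulr_ge0 // enorm_ge0.
  - by rewrite nnegrE ltW.
  - by rewrite /s mulrAC ler_pdivrMr // ler_pM2l.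
have e2 : s * (Phi - dotv d D) <= s * (ahi * sigma) by apply: ler_wpM2l.
have asig0 : 0 <= ahi * sigma.
  by apply: mulr_ge0 => //; apply: le_trans a1; exact: ltW (lt_le_trans alo0 a0).
have e3 : s * (ahi * sigma) <= lambda k / mu * (ahi * sigma).
  apply: ler_wpM2r => //; rewrite /s; apply: ler_wpM2l; first exact: ltW.
  by rewrite lef_pV2 ?posrE.
rewrite hx.
have -> : x k - s *: d - xs = D - s *: d by rewrite /D; apply/rowP => j; rewrite !mxE; ring.
rewrite !enorm_sq dotv_expand (@dotvC _ _ D d).
have -> : 2 * lambda k / eta * Phi = 2 * s * Phi by rewrite /s !mulrA.
have -> : 2 * ahi * sigma / mu * lambda k = 2 * (lambda k / mu * (ahi * sigma)).
  by rewrite !mulrA; ring.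
lra.
Qed.
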